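(* For every integer $n>0$, if hyperplanes $h_1,\dots,h_k$ in $\mathbb{R}^n$ form a skew cover of $\{\pm1\}^n$, then $k\ge n/2$.
   Context: Hyperplanes $h_i=\{x\in\mathbb{R}^n:\langle v_i,x\rangle=\mu_i\}$, $i\in[k]$, form a skew cover of $\{\pm1\}^n$ if every vertex of $\{\pm1\}^n$ lies in at least one $h_i$ and, for each $i\in[k]$, every coordinate of $v_i$ is non-zero. *)

(* Defs.v *)
From mathcomp Require Import all_boot all_order all_algebra.
From mathcomp Require Import reals.
Set Implicit Arguments. Unset Strict Implicit. Unset Printing Implicit Defensive.
Import Order.TTheory GRing.Theory Num.Theory.
Local Open Scope ring_scope.

Definition cube_vertex (R : realType) (n : nat) (x : 'rV[R]_n) : Prop :=
  forall j : 'I_n, x 0 j = 1 \/ x 0 j = -1.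

Definition dotv (R : realType) (n : nat) (v x : 'rV[R]_n) : R :=
  \sum_(j < n) v 0 j * x 0 j.

Definition skew_cover (R : realType) (n k : nat)
    (v : 'I_k -> 'rV[R]_n) (mu : 'I_k -> R) : Prop :=
  (forall x : 'rV[R]_n, cube_vertex x -> exists i : 'I_k, dotv (v i) x = mu i)
  /\ (forall (i : 'I_k) (j : 'I_n), v i 0 j != 0).

(* Main.v *)
Require Import Defs.
From mathcomp Require Import all_boot all_order all_algebra.
From mathcomp Require Import reals.
From mathcomp Require Import ring lra zify.
Import Order.TTheory GRing.Theory Num.Theory.
Local Open Scope ring_scope.
Set Implicit Arguments. Unset Strict Implicit. Unset Printing Implicit Defensive.

Definition tog n (S : {set 'I_n}) (j : 'I_n) : {set 'I_n} :=
  if j \in S then S :\ j else j |: S.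

Lemma togK n (j : 'I_n) : involutive (fun S : {set 'I_n} => tog S j).
Proof.
move=> S; case hj: (j \in S); rewrite /tog hj.
- by rewrite setD11 setD1K.
- by rewrite setU11 setU1K ?hj.
Qed.

Lemma tog_inj n (j : 'I_n) : injective (fun S : {set 'I_n} => tog S j).
Proof. exact: inv_inj (togK j). Qed.

Definition sg (R : realFieldType) n (x : {set 'I_n}) (j : 'I_n) : R :=
  if j \in x then -1 else 1.

Definition chi (R : realFieldType) n (S x : {set 'I_n}) : R :=
  \prod_(j in S) sg R x j.

Lemma sg2 (R : realFieldType) n (x : {set 'I_n}) j : sg R x j * sg R x j = 1.
Proof. by rewrite /sg; case: ifP => _; rewrite ?mulrNN mulr1. Qed.

Lemma chi_tog (R : realFieldType) n (S x : {set 'I_n}) j :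
  chi R (tog S j) x = sg R x j * chi R S x.
Proof.
rewrite /chi /tog; case: ifP => hj.
- rewrite [in RHS](bigD1 j) //= mulrA sg2 mul1r.
  by apply: eq_bigl => i; rewrite in_setD1 andbC.
- rewrite (bigD1 j) ?setU11 //=; congr (_ * _).
  apply: eq_bigl => i; rewrite in_setU1.
  by case: (eqVneq i j) => [->|_] /=; rewrite ?eqxx ?hj ?andbT.
Qed.

Lemma sg_tog (R : realFieldType) n (x : {set 'I_n}) u j :
  sg R (tog x u) j = if j == u then - sg R x j else sg R x j.
Proof.
rewrite /sg /tog; case hu: (u \in x); case: (eqVneq j u) => [->|nju].
- by rewrite setD11 hu opprK.
- by rewrite in_setD1 nju.
- by rewrite setU11 hu.
- by rewrite in_setU1 (negbTE nju).
Qed.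

Lemma chi_xtog (R : realFieldType) n (S x : {set 'I_n}) u :
  chi R S (tog x u) = (if u \in S then -1 else 1) * chi R S x.
Proof.
rewrite /chi; case: ifP => hu.
- rewrite (bigD1 u) // [in RHS](bigD1 u) //= sg_tog eqxx mulrA mulN1r.
  congr (_ * _); apply: eq_bigr => i /andP[_ hi]; by rewrite sg_tog (negbTE hi).
- rewrite mul1r; apply: eq_bigr => i hi; rewrite sg_tog.
  by case: eqVneq => // eiu; rewrite eiu hu in hi.
Qed.

Definition evalA (R : realFieldType) n (a : {set 'I_n} -> R) (x : {set 'I_n}) : R :=
  \sum_S a S * chi R S x.

Definition mulA (R : realFieldType) n (c : 'I_n -> R) (m : R) (a : {set 'I_n} -> R) :=
  fun T => \sum_j c j * a (tog T j) - m * a T.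

Lemma eval_mulA (R : realFieldType) n (c : 'I_n -> R) m a x :
  evalA (mulA c m a) x = (\sum_j c j * sg R x j - m) * evalA a x.
Proof.
rewrite /evalA /mulA.
under eq_bigr do rewrite mulrBl.
rewrite sumrB mulrBl; congr (_ - _); last by rewrite mulr_sumr; apply: eq_bigr => S _; rewrite mulrA.
under eq_bigr do rewrite mulr_suml.
rewrite exchange_big /= mulr_suml; apply: eq_bigr => j _.
rewrite (reindex_inj (@tog_inj _ j)) /= mulr_sumr; apply: eq_bigr => S _.
by rewrite togK chi_tog; ring.
Qed.

Lemma chi_sq (R : realFieldType) n (S x : {set 'I_n}) : chi R S x * chi R S x = 1.
Proof. rewrite /chi -big_split /=; apply: big1 => j _; exact: sg2. Qed.

Lemma orth (R : realFieldType) n (S T : {set 'I_n}) :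
  S != T -> \sum_x chi R T x * chi R S x = 0.
Proof.
move=> nST.
have : ~~ [forall u, (u \in S) == (u \in T)].
  apply: contra nST => /forallP h; apply/eqP/setP => u; exact/eqP/h.
rewrite negb_forall => /existsP [u hu].
set X := \sum_x _.
have : X = - X.
  rewrite {1}/X (reindex_inj (@tog_inj _ u)) /= -sumrN; apply: eq_bigr => x _.
  rewrite !chi_xtog.
  by case: (u \in S) (u \in T) hu => [] [] //= _; ring.
lra.
Qed.

Lemma inversion (R : realFieldType) n (a : {set 'I_n} -> R) :
  (forall x, evalA a x = 0) -> forall T, a T = 0.
Proof.
move=> h T.
have E : \sum_x chi R T x * evalA a x = a T * #|{set 'I_n}|%:R.
  rewrite /evalA.
  under eq_bigr do rewrite mulr_sumr.
  rewrite exchange_big /= (bigD1 T) //= [X in _ + X]big1; last first.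
    move=> S nST.
    under eq_bigr do rewrite mulrA [chi R T _ * _]mulrC -mulrA.
    by rewrite -mulr_sumr orth ?mulr0.
  rewrite addr0.
  under eq_bigr do rewrite mulrA [chi R T _ * _]mulrC -mulrA chi_sq mulr1.
  by rewrite sumr_const mulr_natr.
have : \sum_x chi R T x * evalA a x = 0 by rewrite big1 // => x _; rewrite h mulr0.
rewrite E => /eqP; rewrite mulf_eq0 pnatr_eq0 => /orP[/eqP //|].
move=> /eqP H0.
have : (0 < #|{set 'I_n}|)%N by apply/card_gt0P; exists set0.
by rewrite H0.
Qed.

Definition Up (R : realFieldType) n (b : {set 'I_n} -> R) (S : {set 'I_n}) : R :=
  \sum_(i in S) b (S :\ i).
Definition Dn (R : realFieldType) n (b : {set 'I_n} -> R) (S : {set 'I_n}) : R :=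
  \sum_(j in ~: S) b (j |: S).

Lemma setUD1C n (S : {set 'I_n}) i j : i != j ->
  (j |: S) :\ i = j |: (S :\ i).
Proof.
move=> nij; apply/setP => x; rewrite !(in_setD1, in_setU1).
case: (eqVneq x j) => [->|] //=; by rewrite eq_sym nij.
Qed.

Lemma DU_UD (R : realFieldType) n (b : {set 'I_n} -> R) S :
  Dn (Up b) S + #|S|%:R * b S = Up (Dn b) S + #|~: S|%:R * b S.
Proof.
rewrite /Dn /Up.
have E1 : \sum_(j in ~: S) \sum_(i in j |: S) b ((j |: S) :\ i)
   = \sum_(j in ~: S) b S + \sum_(j in ~: S) \sum_(i in S) b ((j |: S) :\ i).
  rewrite -big_split; apply: eq_bigr => j; rewrite in_setC => hj.
  rewrite (bigD1 j) ?setU11 //= setU1K //; congr (_ + _).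
  apply: eq_bigl => i; rewrite in_setU1.
  by case: (eqVneq i j) => [->|] /=; rewrite ?andbT ?andbF ?(negbTE hj).
have E2 : \sum_(i in S) \sum_(j in ~: (S :\ i)) b (j |: (S :\ i))
   = \sum_(i in S) b S + \sum_(i in S) \sum_(j in ~: S) b (j |: (S :\ i)).
  rewrite -big_split; apply: eq_bigr => i hi.
  rewrite (bigD1 i) ?in_setC ?setD11 //= setD1K //; congr (_ + _).
  apply: eq_bigl => j; rewrite !in_setC in_setD1.
  by case: (eqVneq j i) => [->|] /=; rewrite ?andbT ?andbF ?hi.
have E3 : \sum_(j in ~: S) \sum_(i in S) b ((j |: S) :\ i)
    = \sum_(j in ~: S) \sum_(i in S) b (j |: (S :\ i)).
  apply: eq_bigr => j; rewrite in_setC => hj; apply: eq_bigr => i hi.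
  rewrite setUD1C //; apply/eqP => eij; move: hj; by rewrite -eij hi.
rewrite E1 E2 E3 !sumr_const !mulr_natl exchange_big /=.
move: (\sum_(i in S) _) => X; move: (b S *+ _) (b S *+ _) => A B.
by rewrite addrAC [in RHS]addrAC [A + _]addrC.
Qed.

Lemma adjoint (R : realFieldType) n (b z : {set 'I_n} -> R) :
  \sum_S b S * Up z S = \sum_S Dn b S * z S.
Proof.
rewrite /Up /Dn.
under eq_bigr do rewrite mulr_sumr big_mkcond.
under [RHS]eq_bigr do rewrite mulr_suml big_mkcond.
rewrite exchange_big [RHS]exchange_big /=; apply: eq_bigr => i _.
rewrite (reindex_inj (@tog_inj _ i)) /=; apply: eq_bigr => S _.
rewrite /tog in_setC; case hi: (i \in S) => /=.
- by rewrite setD11.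
- by rewrite setU11 setU1K ?hi.
Qed.

Lemma core (R : realFieldType) n (b : {set 'I_n} -> R) m :
  (forall S, b S != 0 -> #|S| = m) -> (2 * m < n)%N ->
  (forall T, Up b T = 0) -> forall S, b S = 0.
Proof.
move=> lev hmn hU.
set c : R := (n - m)%:R - m%:R.
have c0 : 0 < c by rewrite /c subr_gt0 ltr_nat; lia.
have H1 : \sum_S b S * Dn (Up b) S = 0.
  by rewrite big1 // => S _; rewrite /Dn big1 ?mulr0 // => j _; rewrite hU.
have H2 : forall S, b S * Dn (Up b) S = b S * Up (Dn b) S + c * (b S * b S).
  move=> S; case: (eqVneq (b S) 0) => [->|bS0]; first by rewrite !(mul0r, mulr0, addr0).
  have hS := lev S bS0.
  have hC : #|~: S| = (n - m)%N by have := cardsC S; rewrite card_ord; lia.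
  have E := DU_UD b S.
  have -> : Dn (Up b) S = Up (Dn b) S + #|~: S|%:R * b S - #|S|%:R * b S by rewrite -E addrK.
  by rewrite hC hS /c; ring.
move: H1; rewrite (eq_bigr _ (fun S _ => H2 S)) big_split /= adjoint -mulr_sumr.
have A0 : 0 <= \sum_S Dn b S * Dn b S by apply: sumr_ge0 => S _; rewrite -expr2 sqr_ge0.
have B0 : forall S, 0 <= b S * b S by move=> S; rewrite -expr2 sqr_ge0.
have B0' : 0 <= \sum_S b S * b S by apply: sumr_ge0 => S _.
move=> H.
have : c * \sum_S b S * b S <= 0 by lra.
rewrite pmulr_rle0 // => Hle.
have Bz : \sum_S b S * b S = 0 by apply/eqP; rewrite eq_le Hle B0'.
move=> S; have := psumr_eq0P (fun S _ => B0 S) Bz (erefl true) .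
by move=> /(_ S) /eqP; rewrite mulf_eq0 orbb => /eqP.
Qed.

Lemma step_inj (R : realFieldType) n (c : 'I_n -> R) (b : {set 'I_n} -> R) m :
  (forall j, c j != 0) -> (forall S, b S != 0 -> #|S| = m) -> (2 * m < n)%N ->
  (forall T : {set 'I_n}, \sum_(i in T) c i * b (T :\ i) = 0) -> forall S, b S = 0.
Proof.
move=> hc lev hmn hT.
pose b' (S : {set 'I_n}) := b S / \prod_(i in S) c i.
have P0 : forall S : {set 'I_n}, \prod_(i in S) c i != 0.
  by move=> S; apply/prodf_neq0 => i _; exact: hc.
have hb' : forall S, b' S = 0.
  apply: (@core _ _ _ m) => //.
  - move=> S; rewrite /b' mulf_eq0 negb_or => /andP[h _]; exact: lev.
  - move=> T; have := hT T; rewrite /Up.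
    have -> : \sum_(i in T) c i * b (T :\ i) = \prod_(i in T) c i * \sum_(i in T) b' (T :\ i).
      rewrite mulr_sumr; apply: eq_bigr => i hi; rewrite /b' (bigD1 i hi) /=.
      have -> : \prod_(j in T | j != i) c j = \prod_(j in T :\ i) c j.
        by apply: eq_bigl => j; rewrite in_setD1 andbC.
      by rewrite -mulrA; congr (_ * _); rewrite mulrC divfK ?P0.
    by move/eqP; rewrite mulf_eq0 (negbTE (P0 T)) /= => /eqP.
move=> S; have := hb' S; rewrite /b' => /eqP.
by rewrite mulf_eq0 invr_eq0 (negbTE (P0 S)) orbF => /eqP.
Qed.

Definition deg_le (R : realFieldType) n d (a : {set 'I_n} -> R) :=
  forall S : {set 'I_n}, (d < #|S|)%N -> a S = 0.

Lemma card_tog n (S : {set 'I_n}) j : (#|S| <= #|tog S j|.+1)%N.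
Proof.
rewrite /tog; case: ifP => hj.
- by rewrite (cardsD1 j S) hj.
- by rewrite cardsU1 hj; lia.
Qed.

Lemma mulA_top (R : realFieldType) n (c : 'I_n -> R) mu a m (T : {set 'I_n}) :
  deg_le m a -> #|T| = m.+1 ->
  mulA c mu a T = \sum_(i in T) c i * a (T :\ i).
Proof.
move=> ha hT; rewrite /mulA (ha T) ?hT // mulr0 subr0 (bigID (fun i => i \in T)) /=.
rewrite [X in _ + X]big1 ?addr0.
- by apply: eq_bigr => i hi; rewrite /tog hi.
- move=> i hi; rewrite /tog (negbTE hi) ha ?mulr0 // cardsU1 hi hT.
  by [].
Qed.

Lemma level_step (R : realFieldType) n (c : 'I_n -> R) mu a m :
  (forall j, c j != 0) -> (2 * m < n)%N -> deg_le m a ->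
  (exists S : {set 'I_n}, #|S| = m /\ a S != 0) ->
  deg_le m.+1 (mulA c mu a) /\ exists T : {set 'I_n}, #|T| = m.+1 /\ mulA c mu a T != 0.
Proof.
move=> hc hmn ha [S0 [hS0 aS0]]; split.
  move=> S hS; rewrite /mulA (ha S) ?mulr0 ?subr0; last by lia.
  apply: big1 => j _; rewrite ha ?mulr0 //.
  have := card_tog S j; lia.
pose b (S : {set 'I_n}) := if #|S| == m then a S else 0.
have lev : forall S : {set 'I_n}, b S != 0 -> #|S| = m.
  move=> S; rewrite /b; case: (eqVneq #|S| m) => // _.
  by rewrite eqxx.
case: (boolP [exists T : {set 'I_n}, \sum_(i in T) c i * b (T :\ i) != 0]); last first.
  move=> /existsPn hn.
  have := @step_inj _ _ c b m hc lev hmn (fun T => eqP (negbNE (hn T))) S0.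
  by rewrite /b hS0 eqxx => /eqP; rewrite (negbTE aS0).
move=> /existsP [T hT].
have cT : #|T| = m.+1.
  apply/eqP; apply: contraNT hT => hne; apply/eqP.
  apply: big1 => i hi; rewrite /b.
  have := cardsD1 i T; rewrite hi add1n => hc'.
  case: eqP => [h|]; last by rewrite mulr0.
  by move: hne; rewrite hc' h eqxx.
exists T; split => //.
rewrite (mulA_top _ _ ha cT).
suff -> : \sum_(i in T) c i * a (T :\ i) = \sum_(i in T) c i * b (T :\ i) by [].
apply: eq_bigr => i hi; rewrite /b.
have := cardsD1 i T; rewrite hi add1n cT => -[->]; by rewrite eqxx.
Qed.

Definition a0 (R : realFieldType) n : {set 'I_n} -> R :=
  fun S => if S == set0 then 1 else 0.

Definition prodA (R : realType) n k (v : 'I_k -> 'rV[R]_n) (mu : 'I_k -> R)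
  (s : seq 'I_k) : {set 'I_n} -> R :=
  foldr (fun i a => mulA (fun j => v i 0 j) (mu i) a) (@a0 R n) s.

Lemma eval_prodA (R : realType) n k (v : 'I_k -> 'rV[R]_n) mu s x :
  evalA (prodA v mu s) x = \prod_(i <- s) (\sum_j v i 0 j * sg R x j - mu i).
Proof.
elim: s => [|i s IH] /=.
  rewrite big_nil /evalA (bigD1 set0) //= big1 ?addr0.
    by rewrite /a0 eqxx mul1r /chi big_set0.
  by move=> S /negbTE h; rewrite /a0 h mul0r.
by rewrite eval_mulA IH big_cons.
Qed.

Lemma lev_prodA (R : realType) n k (v : 'I_k -> 'rV[R]_n) mu s :
  (forall i j, v i 0 j != 0) -> (2 * size s <= n)%N ->
  deg_le (size s) (prodA v mu s) /\
  exists T : {set 'I_n}, #|T| = size s /\ prodA v mu s T != 0.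
Proof.
move=> nz; elim: s => [|i s IH] /= hs.
  split.
    by move=> S hS; rewrite /prodA /= /a0; case: eqP => // h; rewrite h cards0 in hS.
  by exists set0; rewrite cards0 /prodA /= /a0 eqxx oner_neq0.
have hs' : (2 * size s <= n)%N by lia.
have [h1 h2] := IH hs'.
apply: level_step => //; lia.
Qed.

Theorem mainTheorem2 (R : realType) (n k : nat) (v : 'I_k -> 'rV[R]_n)
    (mu : 'I_k -> R) :
  (0 < n)%N -> skew_cover v mu -> (n%:R / 2 <= k%:R :> R).
Proof.
move=> _ [cov nz].
case: (leqP n (2 * k)) => hk.
  by rewrite ler_pdivrMr ?ltr0n // -natrM ler_nat mulnC.
exfalso.
have hs : (2 * size (enum 'I_k) <= n)%N by rewrite size_enum_ord; lia.
have [_ [T [_ hT]]] := lev_prodA mu nz hs.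
move: hT; rewrite (@inversion _ _ (prodA v mu (enum 'I_k))) ?eqxx //.
move=> x; rewrite eval_prodA.
pose y : 'rV[R]_n := \row_j sg R x j.
have [|i hi] := cov y.
  by move=> j; rewrite mxE /sg; case: ifP => _; [right|left].
rewrite (bigD1_seq i) ?mem_enum ?enum_uniq //=.
have -> : \sum_j v i 0 j * sg R x j - mu i = 0.
  apply/eqP; rewrite -hi /dotv subr_eq0; apply/eqP; apply: eq_bigr => j _; by rewrite mxE.
by rewrite mul0r.
Qed.
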